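(* The monoid $\operatorname{NDPF}^{(1)}_N$ is generated by the functions $f_0,\dots,f_{N-1}$, and these satisfy the relations $f_i^2=f_i$; $f_if_j=f_jf_i$ whenever $i,j$ are not adjacent modulo $N$; and $f_if_{i+1}f_i=f_{i+1}f_if_{i+1}=f_{i+1}f_i$, with indices taken modulo $N$.
   Context: $\operatorname{NDPF}^{(1)}_N$ is the set of functions $f:\mathbb{Z}\to\mathbb{Z}$ that are regressive ($f(i)\le i$), order preserving ($i\le j\Rightarrow f(i)\le f(j)$) and skew periodic ($f(i+N)=f(i)+N$), excluding the shift functions $i\mapsto i-t$ with $t\neq0$; it is a monoid under composition, with functions acting on the right: $fg$ means apply $f$ first, then $g$. For $i\in\{0,\dots,N-1\}$, $f_i(j)=j-1$ if $j\equiv i+1 \pmod N$ and $f_i(j)=j$ otherwise. *)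

(* Defs.v *)
From Stdlib Require Import ZArith List.
Open Scope Z_scope.

(* Functions Z -> Z; composition acts on the right: (rcomp f g) = "fg" = apply f first, then g. *)
Definition rcomp (f g : Z -> Z) : Z -> Z := fun x => g (f x).

Definition regressive (f : Z -> Z) : Prop := forall i, f i <= i.
Definition order_preserving (f : Z -> Z) : Prop := forall i j, i <= j -> f i <= f j.
Definition skew_periodic (N : Z) (f : Z -> Z) : Prop := forall i, f (i + N) = f i + N.
Definition is_nonzero_shift (f : Z -> Z) : Prop :=
  exists t, t <> 0 /\ forall i, f i = i - t.

Definition NDPF1 (N : Z) (f : Z -> Z) : Prop :=
  regressive f /\ order_preserving f /\ skew_periodic N f /\ ~ is_nonzero_shift f.

Definition fgen (N i : Z) : Z -> Z :=
  fun j => if (j - (i + 1)) mod N =? 0 then j - 1 else j.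

Fixpoint word (N : Z) (l : list Z) : Z -> Z :=
  match l with
  | nil => fun x => x
  | i :: l' => rcomp (fgen N i) (word N l')
  end.

Definition adjacent (N i j : Z) : Prop := j = (i + 1) mod N \/ i = (j + 1) mod N.

(* Main.v *)
Require Import Defs.
From Stdlib Require Import ZArith List Lia Classical Bool.
Open Scope Z_scope.

Lemma modz N a : 0 < N -> (a mod N = 0 <-> exists m, a = m * N).
Proof.
  intros HN; split.
  - intros H. exists (a / N). pose proof (Z.div_mod a N ltac:(lia)). lia.
  - intros [m ->]. apply Z.mod_mul; lia.
Qed.

Lemma not_dN1 d N : 2 <= N -> d * N = 1 -> False.
Proof. intros H1 H2. destruct (Z_lt_le_dec d 1); nia. Qed.

Lemma modE N a b : 0 < N -> ((a - b) mod N = 0 <-> a mod N = b mod N).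
Proof.
  intros HN. rewrite Zminus_mod. split.
  - intros H. apply (modz N) in H; auto. destruct H as [m Hm].
    pose proof (Z.mod_pos_bound a N HN). pose proof (Z.mod_pos_bound b N HN).
    destruct (Z.lt_trichotomy m 0) as [?|[?|?]]; nia.
  - intros H; rewrite H, Z.sub_diag; reflexivity.
Qed.

Lemma F N i y : 0 < N -> fgen N i y = if y mod N =? (i+1) mod N then y - 1 else y.
Proof.
  intros HN; unfold fgen.
  destruct (Z.eqb_spec ((y - (i+1)) mod N) 0) as [H|H];
  destruct (Z.eqb_spec (y mod N) ((i+1) mod N)) as [H'|H']; auto.
  - apply modE in H; tauto.
  - apply modE in H'; tauto.
Qed.

Lemma R_sub1 N (HN : 0 < N) y : (y - 1) mod N = if y mod N =? 0 then N - 1 else y mod N - 1.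
Proof.
  pose proof (Z.div_mod y N ltac:(lia)). pose proof (Z.mod_pos_bound y N HN).
  destruct (Z.eqb_spec (y mod N) 0).
  - symmetry. apply (Z.mod_unique _ _ (y / N - 1)); lia.
  - symmetry. apply (Z.mod_unique _ _ (y / N)); lia.
Qed.

Lemma P1 N a : 0 <= a < N -> (a+1) mod N = if a =? N - 1 then 0 else a + 1.
Proof.
  intros H. destruct (Z.eqb_spec a (N-1)).
  - replace (a+1) with N by lia. apply Z.mod_same; lia.
  - apply Z.mod_small; lia.
Qed.

Ltac crunch N HN :=
  repeat match goal with
  | H : context [(?y - 1) mod N] |- _ => rewrite (R_sub1 N HN y) in H
  | |- context [(?y - 1) mod N] => rewrite (R_sub1 N HN y)
  | H : context [(?a + 1) mod N] |- _ => rewrite (P1 N a) in H by lia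
  | |- context [(?a+1) mod N] => rewrite (P1 N a) by lia
  | H : (?a =? ?b) = true |- _ => apply Z.eqb_eq in H
  | H : (?a =? ?b) = false |- _ => apply Z.eqb_neq in H
  | |- context [if ?b then _ else _] => destruct b eqn:?
  | H : context [if ?b then _ else _] |- _ => destruct b eqn:?
  end.

Section Rel.
Variable N : Z.
Hypothesis HN3 : 3 <= N.

Lemma gen_in : forall i, 0 <= i < N -> NDPF1 N (fgen N i).
Proof.
  assert (HN : 0 < N) by lia.
  intros i Hi. repeat split.
  - intros j. rewrite F by lia. destruct (_ =? _); lia.
  - intros a b Hab. rewrite !F by lia.
    assert (a = b \/ a < b) as [->|] by lia; [lia|].
    destruct (_ =? _); destruct (_ =? _); lia.
  - intros j. rewrite !F by lia.
    replace (j + N) with (j + 1 * N) by ring. rewrite Z_mod_plus_full.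
    destruct (_ =? _); lia.
  - intros [t [Ht Hf]]. specialize (Hf i). rewrite F in Hf by lia.
    rewrite (Z.mod_small i N) in Hf by lia. crunch N HN; lia.
Qed.

Lemma rel_idem : forall i, 0 <= i < N -> forall x, rcomp (fgen N i) (fgen N i) x = fgen N i x.
Proof.
  assert (HN : 0 < N) by lia.
  intros i Hi x. unfold rcomp. rewrite !F by lia.
  pose proof (Z.mod_pos_bound x N HN). crunch N HN; lia.
Qed.

Lemma rel_comm : forall i j, 0 <= i < N -> 0 <= j < N -> ~ adjacent N i j ->
     forall x, rcomp (fgen N i) (fgen N j) x = rcomp (fgen N j) (fgen N i) x.
Proof.
  assert (HN : 0 < N) by lia.
  intros i j Hi Hj Hadj x. unfold adjacent, rcomp in *. rewrite !F by lia.
  pose proof (Z.mod_pos_bound x N HN). crunch N HN; lia.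
Qed.

Lemma rel_braid : forall i, 0 <= i < N ->
     let k := (i + 1) mod N in
     (forall x, rcomp (rcomp (fgen N i) (fgen N k)) (fgen N i) x
                = rcomp (rcomp (fgen N k) (fgen N i)) (fgen N k) x) /\
     (forall x, rcomp (rcomp (fgen N k) (fgen N i)) (fgen N k) x
                = rcomp (fgen N k) (fgen N i) x).
Proof.
  assert (HN : 0 < N) by lia.
  intros i Hi k. subst k. split; intros x; unfold rcomp; rewrite !F by lia;
  pose proof (Z.mod_pos_bound x N HN); crunch N HN; lia.
Qed.
End Rel.

Section Gen.
Variable N : Z.
Hypothesis HN3 : 3 <= N.

Lemma sp_nat g : skew_periodic N g -> forall (n:nat) x, g (x + Z.of_nat n * N) = g x + Z.of_nat n * N.
Proof.
  intros Hs n; induction n; intros x.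
  - simpl. rewrite Z.add_0_r. lia.
  - rewrite Nat2Z.inj_succ, Z.mul_succ_l.
    replace (x + (Z.of_nat n * N + N)) with ((x + Z.of_nat n * N) + N) by ring.
    rewrite Hs, IHn. ring.
Qed.

Lemma sp_Z g : skew_periodic N g -> forall m x, g (x + m * N) = g x + m * N.
Proof.
  intros Hs m x. destruct (Z_le_gt_dec 0 m).
  - replace m with (Z.of_nat (Z.to_nat m)) by lia. apply sp_nat; auto.
  - pose proof (sp_nat g Hs (Z.to_nat (- m)) (x + m * N)).
    replace (Z.of_nat (Z.to_nat (-m))) with (-m) in H by lia.
    replace (x + m * N + - m * N) with x in H by ring. lia.
Qed.

Lemma surj_shift g : regressive g -> order_preserving g -> skew_periodic N g ->
  (forall w, exists z, g z = w) -> forall x0, g x0 < x0 -> is_nonzero_shift g.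
Proof.
  intros Hr Ho Hs Hsu x0 Hx0.
  assert (S1 : forall x, g (x+1) <= g x + 1).
  { intros x. destruct (Z_le_gt_dec (g (x+1)) (g x + 1)); auto.
    destruct (Hsu (g x + 1)) as [z Hz].
    destruct (Z.le_gt_cases z x).
    - pose proof (Ho z x H). lia.
    - pose proof (Ho (x+1) z ltac:(lia)). lia. }
  assert (S2 : forall (n:nat) x, g (x + Z.of_nat n) <= g x + Z.of_nat n).
  { induction n; intros x. simpl. rewrite Z.add_0_r. lia.
    rewrite Nat2Z.inj_succ. replace (x + Z.succ (Z.of_nat n)) with ((x + Z.of_nat n) + 1) by lia.
    pose proof (S1 (x + Z.of_nat n)). pose proof (IHn x). lia. }
  assert (S3 : forall x, g (x+1) = g x + 1).
  { intros x. pose proof (S1 x). pose proof (Ho x (x+1) ltac:(lia)).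
    destruct (Z.eq_dec (g (x+1)) (g x + 1)); auto.
    pose proof (S2 (Z.to_nat (N-1)) (x+1)).
    replace (x + 1 + Z.of_nat (Z.to_nat (N - 1))) with (x + N) in H1 by lia.
    rewrite Hs in H1. lia. }
  assert (S4 : forall x, g x = g 0 + x).
  { apply Z.peano_ind.
    - lia.
    - intros x IH. rewrite <- Z.add_1_r, S3. lia.
    - intros x IH. pose proof (S3 (Z.pred x)). replace (Z.pred x + 1) with x in H by lia. lia. }
  exists (- g 0). split.
  - pose proof (S4 x0). lia.
  - intros i. rewrite S4. lia.
Qed.

Lemma exists_v g : NDPF1 N g -> forall x0, g x0 < x0 ->
  exists v x, g x = v /\ v < x /\ forall z, g z <> v + 1.
Proof.
  intros [Hr [Ho [Hs Hns]]] x0 Hx0.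
  apply NNPP. intros Hno.
  assert (Hprop : forall v, (exists x, g x = v /\ v < x) -> exists x, g x = v + 1 /\ v + 1 < x).
  { intros v [x [Hx Hvx]].
    assert (Hat : exists z, g z = v + 1).
    { apply NNPP. intros Hn. apply Hno. exists v, x. repeat split; auto.
      intros z Hz. apply Hn. eauto. }
    destruct Hat as [z Hz]. exists z. split; auto.
    destruct (Z.le_gt_cases z x).
    - pose proof (Ho z x H). lia.
    - pose proof (Hr x). lia. }
  assert (Hall : forall n:nat, exists x, g x = g x0 + Z.of_nat n /\ g x0 + Z.of_nat n < x).
  { induction n. exists x0. simpl. lia.
    destruct (Hprop _ IHn) as [x Hx]. exists x. rewrite Nat2Z.inj_succ. lia. }
  apply Hns. apply (surj_shift g Hr Ho Hs) with x0; auto.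
  intros w. set (m := Z.abs (g x0 - w)).
  destruct (Hall (Z.to_nat (w + m * N - g x0))) as [z [Hz _]].
  assert (0 <= w + m * N - g x0) by (subst m; nia).
  rewrite Z2Nat.id in Hz by lia.
  exists (z + (- m) * N). rewrite sp_Z by auto. lia.
Qed.

Fixpoint sumZ (f : Z -> Z) (n : nat) : Z :=
  match n with O => 0 | S n' => sumZ f n' + f (Z.of_nat n') end.

Lemma sum_nonneg f n : (forall x, 0 <= f x) -> 0 <= sumZ f n.
Proof. intros H; induction n; simpl; [lia|]. pose proof (H (Z.of_nat n)); lia. Qed.

Lemma sum_lt f f' n : (forall x, f' x <= f x) -> forall k, (k < n)%nat ->
  f' (Z.of_nat k) < f (Z.of_nat k) -> sumZ f' n < sumZ f n.
Proof.
  intros H. induction n; intros k Hk Hlt; [lia|]. simpl.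
  assert (Hle : forall m, sumZ f' m <= sumZ f m).
  { induction m; simpl; [lia|]. pose proof (H (Z.of_nat m)); lia. }
  destruct (Nat.eq_dec k n).
  - subst. pose proof (Hle n). lia.
  - pose proof (IHn k ltac:(lia) Hlt). pose proof (H (Z.of_nat n)). lia.
Qed.

Definition M (g : Z -> Z) := sumZ (fun x => x - g x) (Z.to_nat N).

Definition hfun (v : Z) (g : Z -> Z) x :=
  if ((g x - v) mod N =? 0) && (g x <? x) then g x + 1 else g x.

Ltac dh g v x :=
  unfold hfun; destruct ((g x - v) mod N =? 0) eqn:?, (g x <? x) eqn:?; simpl;
  repeat match goal with
  | H : (_ =? _) = true |- _ => apply Z.eqb_eq in H
  | H : (_ =? _) = false |- _ => apply Z.eqb_neq in H
  | H : (_ <? _) = true |- _ => apply Z.ltb_lt in H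
  | H : (_ <? _) = false |- _ => apply Z.ltb_ge in H
  end.

Lemma h_props g v x0 : NDPF1 N g -> g x0 = v -> v < x0 -> (forall z, g z <> v + 1) ->
  (forall x, g x = fgen N (v mod N) (hfun v g x)) /\ NDPF1 N (hfun v g) /\
  M (hfun v g) < M g /\ 0 <= M (hfun v g).
Proof.
  intros Hg Hx0 Hvx Hmiss. pose proof Hg as [Hr [Ho [Hs Hns]]].
  assert (HN : 0 < N) by lia.
  assert (Hreg : regressive (hfun v g)).
  { intros x. dh g v x; pose proof (Hr x); lia. }
  split; [|split; [|split]].
  - intros x. unfold fgen.
    replace (hfun v g x - (v mod N + 1)) with (hfun v g x - 1 - v mod N) by ring.
    rewrite Zminus_mod_idemp_r.
    dh g v x.
    + replace (g x + 1 - 1 - v) with (g x - v) by ring. rewrite Heqb. simpl. lia.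
    + destruct (Z.eqb_spec ((g x - 1 - v) mod N) 0); auto.
      apply modz in Heqb; auto. apply modz in e; auto.
      destruct Heqb as [m1 H1], e as [m2 H2]. exfalso. apply (not_dN1 (m1 - m2) N); lia.
    + destruct (Z.eqb_spec ((g x - 1 - v) mod N) 0); auto.
      apply modz in e; auto. destruct e as [m2 H2]. exfalso.
      apply (Hmiss (x + (- m2) * N)). rewrite sp_Z by auto. lia.
    + destruct (Z.eqb_spec ((g x - 1 - v) mod N) 0); auto.
      apply modz in e; auto. destruct e as [m2 H2]. exfalso.
      apply (Hmiss (x + (- m2) * N)). rewrite sp_Z by auto. lia.
  - repeat split; auto.
    + intros x y Hxy. pose proof (Ho x y Hxy). pose proof (Hr x). pose proof (Hr y).
      unfold hfun.
      destruct ((g x - v) mod N =? 0) eqn:E1, (g x <? x) eqn:E2,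
               ((g y - v) mod N =? 0) eqn:E3, (g y <? y) eqn:E4; simpl;
      repeat match goal with
      | H : (_ =? _) = true |- _ => apply Z.eqb_eq in H
      | H : (_ =? _) = false |- _ => apply Z.eqb_neq in H
      | H : (_ <? _) = true |- _ => apply Z.ltb_lt in H
      | H : (_ <? _) = false |- _ => apply Z.ltb_ge in H
      end; try lia;
      (destruct (Z.eq_dec (g x) (g y)) as [He|]; [rewrite He in *|]; lia).
    + intros x. unfold hfun. rewrite Hs.
      replace (g x + N - v) with ((g x - v) + 1 * N) by ring. rewrite Z_mod_plus_full.
      destruct ((g x - v) mod N =? 0); simpl; rewrite ?Hs; [|lia].
      destruct (Z.ltb_spec (g x) x), (Z.ltb_spec (g x + N) (x + N)); simpl; rewrite ?Hs; lia.
    + intros [t [Ht Hf]].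
      pose proof (Hf (v + t)). pose proof (Hreg (v + t)).
      revert H H0. dh g v (v + t); intros.
      * apply modz in Heqb; auto. destruct Heqb as [m Hm].
        apply (not_dN1 (-m) N); lia.
      * rewrite H in Heqb. replace (v + t - t - v) with 0 in Heqb by ring.
        rewrite Z.mod_0_l in Heqb; lia.
      * rewrite H in Heqb. replace (v + t - t - v) with 0 in Heqb by ring.
        rewrite Z.mod_0_l in Heqb; lia.
      * rewrite H in Heqb. replace (v + t - t - v) with 0 in Heqb by ring.
        rewrite Z.mod_0_l in Heqb; lia.
  - unfold M. set (x1 := x0 mod N).
    pose proof (Z.div_mod x0 N ltac:(lia)). pose proof (Z.mod_pos_bound x0 N HN).
    apply (sum_lt _ _ _) with (k := Z.to_nat x1).
    + intros x. dh g v x; lia.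
    + apply Nat2Z.inj_lt. rewrite !Z2Nat.id; lia.
    + rewrite Z2Nat.id by lia.
      assert (Hg1 : g x1 = v - (x0 / N) * N).
      { pose proof (sp_Z g Hs (x0 / N) x1). replace (x1 + x0 / N * N) with x0 in H1 by (subst x1; lia). lia. }
      dh g v x1; try lia.
      all: rewrite Hg1 in Heqb; replace (v - x0 / N * N - v) with ((- (x0 / N)) * N) in Heqb by ring;
        rewrite Z.mod_mul in Heqb; lia.
  - unfold M. apply sum_nonneg. intros x. pose proof (Hreg x). lia.
Qed.

Lemma word_app l i x : word N (l ++ i :: nil) x = fgen N i (word N l x).
Proof. revert x; induction l; intros x; simpl; unfold rcomp; auto. Qed.

Lemma generation : forall g, NDPF1 N g ->
  exists l : list Z, Forall (fun i => 0 <= i < N) l /\ forall x, g x = word N l x.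
Proof.
  assert (HN : 0 < N) by lia.
  assert (Main : forall n:nat, forall g, NDPF1 N g -> M g <= Z.of_nat n ->
    exists l : list Z, Forall (fun i => 0 <= i < N) l /\ forall x, g x = word N l x).
  { induction n; intros g Hg HM.
    all: destruct (classic (forall x, g x = x)) as [Hid|Hnid];
      [exists nil; split; [constructor | intros x; simpl; apply Hid]|].
    all: apply not_all_ex_not in Hnid; destruct Hnid as [x0 Hx0];
      pose proof Hg as [Hr _]; specialize (Hr x0);
      destruct (exists_v g Hg x0 ltac:(lia)) as [v [x [Hx [Hvx Hmiss]]]];
      destruct (h_props g v x Hg Hx Hvx Hmiss) as [Heq [Hh [Hlt Hnn]]].
    - simpl in HM. lia.
    - destruct (IHn (hfun v g) Hh ltac:(lia)) as [l [Hl Hw]].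
      exists (l ++ (v mod N) :: nil). split.
      + apply Forall_app; split; auto. constructor; auto. apply Z.mod_pos_bound; lia.
      + intros y. rewrite word_app, <- Hw. apply Heq. }
  intros g Hg. apply (Main (Z.to_nat (M g)) g Hg). lia.
Qed.
End Gen.

Theorem mainTheorem6 (N : Z) (HN : 3 <= N) :
  (forall i, 0 <= i < N -> NDPF1 N (fgen N i)) /\
  (forall g, NDPF1 N g ->
     exists l : list Z, Forall (fun i => 0 <= i < N) l /\ forall x, g x = word N l x) /\
  (forall i, 0 <= i < N -> forall x, rcomp (fgen N i) (fgen N i) x = fgen N i x) /\
  (forall i j, 0 <= i < N -> 0 <= j < N -> ~ adjacent N i j ->
     forall x, rcomp (fgen N i) (fgen N j) x = rcomp (fgen N j) (fgen N i) x) /\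
  (forall i, 0 <= i < N ->
     let k := (i + 1) mod N in
     (forall x, rcomp (rcomp (fgen N i) (fgen N k)) (fgen N i) x
                = rcomp (rcomp (fgen N k) (fgen N i)) (fgen N k) x) /\
     (forall x, rcomp (rcomp (fgen N k) (fgen N i)) (fgen N k) x
                = rcomp (fgen N k) (fgen N i) x)).
Proof.
  split; [apply gen_in; auto|].
  split; [apply generation; auto|].
  split; [apply rel_idem; auto|].
  split; [apply rel_comm; auto|].
  apply rel_braid; auto.
Qed.
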